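(* The labelling of the pointed partition posets ($\operatorname{Perm}$-partition posets) on $n$ elements, which labels the edge between $(A_1,\dots,A_p)$ and the pointed partition obtained by merging $A_i$ and $A_j$ by $(\max(\min A_i,\min A_j),\,a+n-p)$, where $a\in\{\min A_i,\min A_j\}$ is the minimal element of the part whose pointed element is not chosen as pointed element of $A_i\cup A_j$ (labels ordered lexicographically), is compatible with isomorphisms of subposets.
   Context: A pointed partition of $\{1,\dots,n\}$ is a set partition with one distinguished element in each part; they are ordered by refinement, where $A\le B$ requires moreover that each element pointed in $B$ is pointed in $A$. These are the partition posets of the basic-set operad $\operatorname{Perm}$, whose elements in arity $n$ are $e_{n,k}$, $1\le k\le n$, with $\gamma(e_{p,a};e_{k_1,b_1},\dots,e_{k_p,b_p})=e_{k_1+\dots+k_p,\,k_1+\dots+k_{a-1}+b_a}$. For a covering $\lambda\prec\omega$ merging parts $A_i,A_j$, $D_\lambda^\omega=\{\min A_i,\min A_j\}$ and $\delta_\lambda^\omega$ is the element of $\operatorname{Perm}$ on these two points recording which one carries the chosen pointed element; for general $\lambda\le\omega$, $D_\lambda^\omega$ is the set of minima of the parts of $\lambda$ contained in non-trivially merged parts of $\omega$, and $\delta^\omega_\lambda$ is the induced pointed partition of $D_\lambda^\omega$. Two interval subposets $\Pi_1,\Pi_2$ with $E_i=\bigcup_{\lambda\le\omega\in\Pi_i}D_\lambda^\omega$ are isomorphic if there is a poset isomorphism $g$ and an increasing bijection $f:E_1\to E_2$ with $\delta_{g(\lambda)}^{g(\omega)}=f(\delta_\lambda^\omega)$ for every covering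 $\lambda\prec\omega$. A family of labellings is compatible with isomorphisms of subposets if every such isomorphism induces a map on labels sending increasing chains to increasing chains, non-increasing chains to non-increasing chains, and preserving the lexicographic preorder on chains. *)

(* Defs.v *)
From mathcomp Require Import all_boot.
Set Implicit Arguments. Unset Strict Implicit. Unset Printing Implicit Defensive.

(* Elements 1..n are represented by ordinals i : 'I_n standing for i+1. *)

Section PP.
Variable n : nat.

Definition is_pp (x : {set {set 'I_n}} * {set 'I_n}) : bool :=
  partition x.1 [set: 'I_n] && [forall B in x.1, #|B :&: x.2| == 1].

Definition pp := {x : {set {set 'I_n}} * {set 'I_n} | is_pp x}.

Definition parts (x : pp) : {set {set 'I_n}} := (val x).1.
Definition pointed (x : pp) : {set 'I_n} := (val x).2.

Definition pple (x y : pp) : bool :=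
  [forall B in parts x, exists C in parts y, B \subset C] &&
  (pointed y \subset pointed x).

Definition pplt (x y : pp) : bool := pple x y && (x != y).

Definition ppcov (x y : pp) : bool :=
  pplt x y && ~~ [exists z : pp, pplt x z && pplt z y].

(* 0-based value of the minimum of a (nonempty) part *)
Definition bmin (B : {set 'I_n}) : nat := \big[minn/n]_(i in B) (i : nat).

(* D_x^y : minima of the parts of x contained in non-trivially merged parts
   of y (= parts of x which are not parts of y) *)
Definition ppD (x y : pp) : {set 'I_n} :=
  [set i : 'I_n | [exists B in parts x :\: parts y, (i : nat) == bmin B]].

(* delta_x^y, the induced pointed partition of D_x^y:
   two minima are in the same part iff they lie in the same part of y;
   a minimum is pointed iff its x-part contains the pointed element of its
   y-part. *)
Definition ppdelta_blk (x y : pp) (i j : 'I_n) : bool :=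
  pblock (parts y) i == pblock (parts y) j.
Definition ppdelta_pt (x y : pp) (i : 'I_n) : bool :=
  pblock (parts x) i :&: pointed y != set0.

(* The labelling of a covering x < y merging A_i and A_j:
   (max(min A_i, min A_j), a + n - p), with 1-based values, where p is the
   number of parts of x and a the minimum of the merged part whose pointed
   element is not kept. *)
Definition pplabel (x y : pp) : nat * nat :=
  ((\max_(i in ppD x y) (i : nat)).+1,
   (\max_(i in ppD x y | ~~ ppdelta_pt x y i) (i : nat)).+1 + n - #|parts x|).

Definition ppinterval (x y : pp) : {set pp} := [set z | pple x z && pple z y].

Definition ppE (I : {set pp}) : {set 'I_n} :=
  \bigcup_(x in I) \bigcup_(y in I | pple x y) ppD x y.

(* maximal chains x = z0 < z1 < ... < zk = y of the interval [x,y],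
   given as the list s = [z1; ...; zk] *)
Definition maxchain (x y : pp) (s : seq pp) : bool :=
  path ppcov x s && (last x s == y).

End PP.

(* isomorphism of interval subposets [x1,y1] (in Pi_n1) and [x2,y2]
   (in Pi_n2), given by g (poset isomorphism) and f (increasing bijection
   E1 -> E2) compatible with the delta's of coverings *)
Definition pp_subposet_iso n1 n2 (x1 y1 : pp n1) (x2 y2 : pp n2)
  (g : pp n1 -> pp n2) (f : 'I_n1 -> 'I_n2) : Prop :=
  let I1 := ppinterval x1 y1 in
  let I2 := ppinterval x2 y2 in
  [/\ g @: I1 = I2,
      {in I1 &, injective g} /\
      {in I1 &, forall u v, pple u v = pple (g u) (g v)},
      f @: ppE I1 = ppE I2,
      {in ppE I1 &, forall i j : 'I_n1, (i < j)%N -> (f i < f j)%N} &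
      {in I1 &, forall u v, ppcov u v ->
         [/\ ppD (g u) (g v) = f @: ppD u v,
             {in ppD u v &, forall i j,
                 ppdelta_blk (g u) (g v) (f i) (f j) = ppdelta_blk u v i j} &
             {in ppD u v, forall i,
                 ppdelta_pt (g u) (g v) (f i) = ppdelta_pt u v i}]}].

Definition lablt (a b : nat * nat) : bool :=
  (a.1 < b.1)%N || ((a.1 == b.1) && (a.2 < b.2)%N).

Definition incr_word (w : seq (nat * nat)) : bool := sorted lablt w.

Fixpoint wlexle (u v : seq (nat * nat)) : bool :=
  match u, v with
  | [::], _ => true
  | _ :: _, [::] => false
  | a :: u', b :: v' => lablt a b || ((a == b) && wlexle u' v')
  end.

Definition word n (x : pp n) (s : seq (pp n)) : seq (nat * nat) :=
  pairmap (@pplabel n) x s.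

(* Main.v *)
Require Import Defs.
From mathcomp Require Import all_boot zify.
Set Implicit Arguments. Unset Strict Implicit. Unset Printing Implicit Defensive.

Lemma ppP n (x : pp n) : partition (parts x) [set: 'I_n].
Proof. case: x => [[P p] H]; rewrite /parts /=; by case/andP: H. Qed.

Lemma ptP n (x : pp n) B : B \in parts x -> #|B :&: pointed x| = 1.
Proof. case: x => [[P p] H]; rewrite /parts /pointed /= => HB; case/andP: H => _ /forall_inP H; exact/eqP/H. Qed.

Lemma trivP n (x : pp n) : trivIset (parts x).
Proof. by case/and3P: (ppP x). Qed.

Lemma coverP n (x : pp n) : cover (parts x) = setT.
Proof. by case/and3P: (ppP x) => /eqP. Qed.

Lemma nset0 n (x : pp n) : set0 \notin parts x.
Proof. by case/and3P: (ppP x). Qed.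

Lemma pb_mem n (x : pp n) i : pblock (parts x) i \in parts x.
Proof. by apply: pblock_mem; rewrite coverP inE. Qed.

Lemma in_pb n (x : pp n) i : i \in pblock (parts x) i.
Proof. by rewrite mem_pblock coverP inE. Qed.

Lemma pb_def n (x : pp n) B i : B \in parts x -> i \in B -> pblock (parts x) i = B.
Proof. exact: def_pblock (trivP x). Qed.

Lemma part_n0 n (x : pp n) B : B \in parts x -> exists i, i \in B.
Proof.
move=> HB; have : B != set0 by apply: contraNneq (nset0 x) => <-.
by case/set0Pn => i; exists i.
Qed.

Lemma pple_refl n (x : pp n) : pple x x.
Proof.
rewrite /pple subxx andbT; apply/forall_inP => B HB; apply/exists_inP.
by exists B.
Qed.

Lemma pple_sub n (x y : pp n) B i :
  pple x y -> B \in parts x -> i \in B -> B \subset pblock (parts y) i.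
Proof.
case/andP=> /forall_inP H _ HB iB; case/exists_inP: (H B HB) => C HC BC.
by rewrite (pb_def HC (subsetP BC i iB)).
Qed.

Lemma pple_trans n (x y z : pp n) : pple x y -> pple y z -> pple x z.
Proof.
move=> Hxy Hyz; move: (Hxy) (Hyz) => /andP[_ p1] /andP[_ p2].
rewrite /pple (subset_trans p2 p1) andbT; apply/forall_inP => B HB.
have [i iB] := part_n0 HB.
apply/exists_inP; exists (pblock (parts z) i); first exact: pb_mem.
apply: subset_trans (pple_sub Hxy HB iB) _.
by apply: pple_sub Hyz _ _; [exact: pb_mem | exact: in_pb].
Qed.

Lemma card_parts n (x : pp n) : #|parts x| <= n.
Proof.
rewrite -[#|parts x|]sum1_card; have := card_partition (ppP x); rewrite cardsT card_ord => e; rewrite [X in _ <= X]e.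
apply: leq_sum => A HA; have [i iA] := part_n0 HA.
by rewrite card_gt0; apply/set0Pn; exists i.
Qed.

Lemma bigmin_le (I : eqType) (r : seq I) (P : pred I) (F : I -> nat) m i0 :
  i0 \in r -> P i0 -> \big[minn/m]_(i <- r | P i) F i <= F i0.
Proof.
elim: r => // h t IH; rewrite inE big_cons => /predU1P [<- -> | it Pi0].
  by rewrite geq_minl.
by case: ifP => _; [rewrite geq_min IH ?orbT | exact: IH].
Qed.

Lemma bmin_mem n (B : {set 'I_n}) : B != set0 -> exists2 i, i \in B & (i : nat) = bmin B.
Proof.
move=> HB; have [i0 i0B] := set0Pn _ HB.
have le : bmin B <= i0 by exact: bigmin_le (mem_index_enum i0) i0B.
have : (bmin B == n) || [exists i in B, (i : nat) == bmin B].
  rewrite /bmin; apply: (big_ind (fun k => (k == n) || [exists i in B, (i : nat) == k])).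
  - by rewrite eqxx.
  - by move=> a b Ha Hb; rewrite /minn; case: ifP.
  - by move=> i iB; apply/orP; right; apply/exists_inP; exists i.
case/orP => [/eqP e | /exists_inP [i iB /eqP e]]; last by exists i.
by have := ltn_ord i0; lia.
Qed.

Lemma ex_free n (u v : pp n) :
  pplt u v -> exists2 B, B \in parts u & B :&: pointed v = set0.
Proof.
move=> /andP[Huv neq].
case: (boolP [exists B in parts u, B :&: pointed v == set0]) =>
  [/exists_inP [B HB /eqP e] | /exists_inPn H]; first by exists B.
exfalso; move/negP: neq; apply; apply/eqP.
have /andP[_ Hpv] := Huv.
have K : forall B, B \in parts u -> B :&: pointed v = B :&: pointed u.
  move=> B HB; apply/eqP; rewrite eqEcard setIS //= (ptP HB) card_gt0.
  exact: H.
have Ept : pointed u = pointed v.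
  apply/eqP; rewrite eqEsubset Hpv andbT; apply/subsetP=> p pu.
  have : p \in pblock (parts u) p :&: pointed u by rewrite inE in_pb.
  by rewrite -K ?pb_mem // inE => /andP[_ ->].
have one : forall C y1 y2, C \in parts v -> y1 \in C :&: pointed v ->
    y2 \in C :&: pointed v -> y1 = y2.
  move=> C y1 y2 HC; have /eqP/cards1P [w ->] := ptP HC.
  by rewrite !in_set1 => /eqP -> /eqP ->.
have sub1 : forall B, B \in parts u -> B \in parts v.
  move=> B HB; have [i iB] := part_n0 HB.
  have BC := pple_sub Huv HB iB.
  suff : pblock (parts v) i = B by move <-; exact: pb_mem.
  apply/eqP; rewrite eqEsubset BC andbT; apply/subsetP => e eC.
  have B'C : pblock (parts u) e \subset pblock (parts v) i.
    rewrite -(same_pblock (trivP v) eC).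
    exact: pple_sub Huv (pb_mem u e) (in_pb u e).
  have [p pB] : exists p, p \in B :&: pointed v by apply/set0Pn; exact: H.
  have [p' pB'] : exists p, p \in pblock (parts u) e :&: pointed v.
    by apply/set0Pn; apply: H; exact: pb_mem.
  have pp' : p = p'.
    apply: (one (pblock (parts v) i)); first exact: pb_mem.
      by move: pB; rewrite !inE => /andP[/(subsetP BC) -> ->].
    by move: pB'; rewrite !inE => /andP[/(subsetP B'C) -> ->].
  move: pB pB'; rewrite !inE -pp' => /andP[pB _] /andP[pB' _].
  have e1 := pb_def HB pB.
  have e2 := pb_def (pb_mem u e) pB'.
  by rewrite -e1 e2 in_pb.
have sub2 : forall C, C \in parts v -> C \in parts u.
  move=> C HC; have [e eC] := part_n0 HC.
  have HB := pb_mem u e; have HBv := sub1 _ HB.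
  by rewrite -(pb_def HC eC) (pb_def HBv (in_pb u e)).
have Epart : parts u = parts v.
  by apply/setP => B; apply/idP/idP; [apply: sub1 | apply: sub2].
move: Epart Ept; rewrite /parts /pointed.
case: u {Huv Hpv K one sub1 sub2 H} => [[a b] ?]; case: v => [[c d] ?] /= e1 e2.
by apply: val_inj => /=; rewrite e1 e2.
Qed.

Lemma ex_label n (u v : pp n) :
  pplt u v -> exists i, (i \in ppD u v) && ~~ ppdelta_pt u v i.
Proof.
move=> Hlt; have [B HB HBe] := ex_free Hlt.
have Bn0 : B != set0 by apply: contraNneq (nset0 u) => <-.
have [i iB ei] := bmin_mem Bn0.
exists i; apply/andP; split.
  rewrite inE; apply/exists_inP; exists B; last by rewrite ei.
  rewrite inE HB andbT; apply/negP => HBv; have := ptP HBv.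
  by rewrite HBe cards0.
by rewrite /ppdelta_pt (pb_def HB iB) HBe eqxx.
Qed.

Lemma cov_card n (u v : pp n) : ppcov u v -> #|parts u| = #|parts v| + 1.
Proof.
move=> /andP[Hlt Hno]; have [B HB HBe] := ex_free Hlt.
have /andP[Huv _] := Hlt; have /andP[_ Hpt] := Huv.
have [i iB] := part_n0 HB.
set C := pblock (parts v) i; have HC : C \in parts v by exact: pb_mem.
have BC : B \subset C := pple_sub Huv HB iB.
have [c cC] : exists c, c \in C :&: pointed v.
  by apply/set0Pn; rewrite -card_gt0 (ptP HC).
move: cC; rewrite inE => /andP[cC cpv].
set B0 := pblock (parts u) c; have HB0 : B0 \in parts u by exact: pb_mem.
have B0B : B0 != B.
  apply/eqP => e; have : c \in B :&: pointed v by rewrite inE -e in_pb cpv.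
  by rewrite HBe inE.
pose h := fun y : 'I_n => if pblock (parts u) y == B then B0 else pblock (parts u) y.
have hP : forall y, h y \in parts u by move=> y; rewrite /h; case: ifP => _ //; exact: pb_mem.
have hB : forall y, h y != B by move=> y; rewrite /h; case: ifP => // /negbT.
have hnB : forall y, y \notin B -> h y = pblock (parts u) y.
  move=> y yB; rewrite /h; case: eqP => // e; by move: yB; rewrite -e in_pb.
have hv : forall y, h y \subset pblock (parts v) y.
  move=> y; rewrite /h; case: eqP => e.
    have -> : pblock (parts v) y = C.
      by apply: pb_def HC _; apply: (subsetP BC); rewrite -e in_pb.
    by rewrite -(pb_def HC cC); exact: pple_sub Huv HB0 (in_pb u c).
  exact: pple_sub Huv (pb_mem u y) (in_pb u y).
have hsurj : forall K, K \in parts u -> K != B -> exists2 e, e \in K & h e = K.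
  move=> K HK KB; have [e eK] := part_n0 HK; exists e => //.
  have eB : e \notin B.
    apply/negP => eB; move/eqP: KB; apply.
    by rewrite -(pb_def HK eK) (pb_def HB eB).
  by rewrite hnB // (pb_def HK eK).
pose PZ := preim_partition h [set: 'I_n].
pose pz := pointed u :\: B.
have cls : forall D, D \in PZ -> exists x, D = [set y | h y == h x].
  move=> D; case/imsetP => x _ ->; exists x; apply/setP => y.
  by rewrite !inE eq_sym.
have clsin : forall x, [set y | h y == h x] \in PZ.
  move=> x; apply/imsetP; exists x => //; apply/setP => y.
  by rewrite !inE eq_sym.
have Hpp : is_pp (PZ, pz).
  rewrite /is_pp /= preim_partitionP /=; apply/forall_inP => D HD.
  have [x ->] := cls D HD.
  have -> : [set y | h y == h x] :&: pz = h x :&: pointed u.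
    apply/setP => y; rewrite !inE; apply/idP/idP.
      case/and3P => /eqP hy yB ->; by rewrite andbT -hy hnB // in_pb.
    case/andP => yh ->; rewrite andbT.
    have e := pb_def (hP x) yh.
    have yB : y \notin B.
      apply/negP => yB; move/eqP: (hB x); apply; by rewrite -e (pb_def HB yB).
    by rewrite yB andbT hnB // e eqxx.
  by rewrite (ptP (hP x)).
pose z : pp n := exist _ (PZ, pz) Hpp.
have Huz : pplt u z.
  apply/andP; split.
    apply/andP; split; last by rewrite /pointed /= subsetDl.
    apply/forall_inP => B' HB'; apply/exists_inP.
    have [e eB'] := part_n0 HB'.
    exists [set y | h y == h e]; first exact: clsin.
    apply/subsetP => y yB'; rewrite inE.
    by rewrite /h (pb_def HB' yB') (pb_def HB' eB').
  apply/eqP => e.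
  have [p pB] : exists p, p \in B :&: pointed u.
    by apply/set0Pn; rewrite -card_gt0 (ptP HB).
  have : p \in pointed z by rewrite -e; move: pB; rewrite inE => /andP[_ ->].
  rewrite /pointed /= /pz inE; move: pB; rewrite inE => /andP[-> _].
  done.
have Hzv : pple z v.
  apply/andP; split.
    apply/forall_inP => D HD; have [x Dx] := cls D HD.
    apply/exists_inP; exists (pblock (parts v) x); first exact: pb_mem.
    rewrite Dx; apply/subsetP => y; rewrite inE => /eqP hyx.
    have [w wh] := part_n0 (hP x).
    have w1 : w \in pblock (parts v) y by apply: (subsetP (hv y)); rewrite hyx.
    have w2 : w \in pblock (parts v) x by apply: (subsetP (hv x)).
    by rewrite -(same_pblock (trivP v) w2) (same_pblock (trivP v) w1) in_pb.
  apply/subsetP => p pv; rewrite /pointed /= /pz inE (subsetP Hpt p pv) andbT.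
  apply/negP => pB; have : p \in B :&: pointed v by rewrite inE pB pv.
  by rewrite HBe inE.
have zv : z = v.
  case: (eqVneq z v) => // nzv; exfalso; move/negP: Hno; apply.
  by apply/existsP; exists z; rewrite Huz /pplt Hzv nzv.
have -> : #|parts v| = #|PZ| by rewrite -zv.
have -> : PZ = (fun K => [set y | h y == K]) @: (parts u :\ B).
  apply/setP => D; apply/idP/imsetP.
    move=> HD; have [x ->] := cls D HD; exists (h x) => //.
    by rewrite !inE hB hP.
  case=> K; rewrite !inE => /andP[KB Ku] ->.
  have [e _ he] := hsurj K Ku KB; rewrite -he; exact: clsin.
rewrite card_in_imset.
  by rewrite (cardsD1 B (parts u)) HB addnC.
move=> K1 K2 /setD1P[K1B K1u] _ e.
have [e1 _ he1] := hsurj K1 K1u K1B.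
have : e1 \in [set y | h y == K1] by rewrite inE he1.
by rewrite e inE he1 => /eqP.
Qed.

Fixpoint wrel n1 n2 (E : {set 'I_n1}) (f : 'I_n1 -> 'I_n2) (c c' : nat)
    (w w' : seq (nat * nat)) : Prop :=
  match w, w' with
  | [::], [::] => True
  | l :: w0, l' :: w0' =>
      (exists m a, [/\ m \in E, a \in E, l = ((m : nat).+1, (a : nat).+1 + c) &
                   l' = ((f m : nat).+1, (f a : nat).+1 + c')]) /\
      wrel E f c.+1 c'.+1 w0 w0'
  | _, _ => False
  end.

Definition fgood n1 n2 (E : {set 'I_n1}) (f : 'I_n1 -> 'I_n2) :=
  {in E &, forall i j : 'I_n1, [/\ (i < j) = (f i < f j),
     ((i : nat) == j) = ((f i : nat) == f j) & (i <= j) = (f i <= f j)]}.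

Lemma fmono_good n1 n2 (E : {set 'I_n1}) (f : 'I_n1 -> 'I_n2) :
  {in E &, forall i j : 'I_n1, (i < j)%N -> (f i < f j)%N} -> fgood E f.
Proof.
move=> H i j iE jE; case: (ltngtP i j) => h.
- have := H i j iE jE h; split; lia.
- have := H j i jE iE h; split; lia.
- have e : i = j by apply: val_inj.
  by rewrite e !ltnn !eqxx !leqnn.
Qed.

Lemma lab_next m a m2 a2 c :
  lablt (m.+1, a.+1 + c) (m2.+1, a2.+1 + c.+1) = (m < m2) || (m == m2) && (a <= a2).
Proof. rewrite /lablt /= ltnS eqSS; congr (_ || (_ && _)); apply/idP/idP; lia. Qed.

Lemma lab_same m a m2 a2 c :
  lablt (m.+1, a.+1 + c) (m2.+1, a2.+1 + c) = (m < m2) || (m == m2) && (a < a2).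
Proof. rewrite /lablt /= ltnS eqSS; congr (_ || (_ && _)); apply/idP/idP; lia. Qed.

Lemma lab_eq m a m2 a2 c :
  ((m.+1, a.+1 + c) == (m2.+1, a2.+1 + c)) = (m == m2) && (a == a2).
Proof. rewrite xpair_eqE eqSS; congr (_ && _); apply/idP/idP; lia. Qed.

Lemma rel_path n1 n2 (E : {set 'I_n1}) (f : 'I_n1 -> 'I_n2) :
  fgood E f -> forall w c c' l l' w', wrel E f c c' (l :: w) (l' :: w') ->
  path lablt l' w' = path lablt l w.
Proof.
move=> hf; elim=> [|l2 w IH] c c' l l' [|l2' w'] //=; try by case=> _ [].
move=> [[m [a [mE aE -> ->]]] [[m2 [a2 [m2E a2E -> ->]]] Hr]].
rewrite !lab_next.
have [lt1 eq1 _] := hf m m2 mE m2E; have [_ _ le2] := hf a a2 aE a2E.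
rewrite -lt1 -eq1 -le2; congr andb.
by apply: (IH c.+1 c'.+1); split => //; exists m2, a2.
Qed.

Lemma rel_sorted n1 n2 (E : {set 'I_n1}) (f : 'I_n1 -> 'I_n2) c c' w w' :
  fgood E f -> wrel E f c c' w w' -> sorted lablt w' = sorted lablt w.
Proof.
move=> hf; case: w => [|l w]; case: w' => [|l' w'] //= H.
exact: (rel_path hf (l:=l) (l':=l') (w:=w) (w':=w') (c:=c) (c':=c')).
Qed.

Lemma rel_lex n1 n2 (E : {set 'I_n1}) (f : 'I_n1 -> 'I_n2) :
  fgood E f -> forall w1 c c' w1' w2 w2', wrel E f c c' w1 w1' ->
  wrel E f c c' w2 w2' -> wlexle w1 w2 -> wlexle w1' w2'.
Proof.
move=> hf; elim=> [|l1 w1 IH] c c' [|l1' w1'] [|l2 w2] [|l2' w2'] //=;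
  try by case.
move=> [[m [a [mE aE -> ->]]] H1] [[m2 [a2 [m2E a2E -> ->]]] H2].
rewrite !lab_same !lab_eq.
have [lt1 eq1 _] := hf m m2 mE m2E; have [lt2 eq2 _] := hf a a2 aE a2E.
rewrite -lt1 -eq1 -lt2 -eq2.
case/orP => [-> // | /andP [-> H]].
by rewrite (IH _ _ _ _ _ H1 H2 H) orbT.
Qed.

Lemma path_le n (u : pp n) s : path (@ppcov n) u s -> pple u (last u s).
Proof.
elim: s u => [|v s IH] u /=; first by rewrite pple_refl.
case/andP => /andP[/andP[Huv _] _] Hp; exact: pple_trans Huv (IH v Hp).
Qed.

Lemma gcov n1 n2 (x1 y1 : pp n1) (x2 y2 : pp n2) g f u v :
  pp_subposet_iso x1 y1 x2 y2 g f ->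
  u \in ppinterval x1 y1 -> v \in ppinterval x1 y1 -> ppcov u v ->
  ppcov (g u) (g v).
Proof.
move=> [gI [ginj gmono] _ _ _] uI vI /andP[/andP[Huv nuv] Hno].
have guI : g u \in ppinterval x2 y2 by rewrite -gI imset_f.
have gvI : g v \in ppinterval x2 y2 by rewrite -gI imset_f.
apply/andP; split.
  apply/andP; split; first by rewrite -gmono.
  by apply: contra nuv => /eqP e; apply/eqP; exact: ginj.
apply/negP => /existsP [z /andP[/andP[Hgz ngz] /andP[Hzv nzv]]].
have zI : z \in ppinterval x2 y2.
  move: guI gvI; rewrite !inE => /andP[a _] /andP[_ b].
  by rewrite (pple_trans a Hgz) (pple_trans Hzv b).
move: zI; rewrite -gI => /imsetP [w wI ezw]; subst z.
move/negP: Hno; apply; apply/existsP; exists w.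
rewrite /pplt (gmono u w) // Hgz (gmono w v) // Hzv /=.
apply/andP; split.
  by apply: contraNneq ngz => ->.
by apply: contraNneq nzv => ->.
Qed.

Lemma maximg n1 n2 (f : 'I_n1 -> 'I_n2) (S : {set 'I_n1}) m :
  m \in S -> (forall i, i \in S -> f i <= f m) ->
  \max_(j in f @: S) (j : nat) = f m.
Proof.
move=> mS H; apply/eqP; rewrite eqn_leq; apply/andP; split.
  by apply/bigmax_leqP => j /imsetP [i iS ->]; exact: H.
exact: (leq_bigmax_cond (f m) (imset_f f mS)).
Qed.

Lemma max_att n (S : {set 'I_n}) i0 : i0 \in S ->
  exists2 m, m \in S & \max_(i in S) (i : nat) = m /\ forall i, i \in S -> i <= m.
Proof.
move=> i0S; have : 0 < #|S| by rewrite card_gt0; apply/set0Pn; exists i0.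
case/(eq_bigmax_cond (fun i : 'I_n => (i : nat))) => m mS e.
exists m => //; split => // i iS; rewrite -e; exact: (leq_bigmax_cond i iS).
Qed.

Lemma label_rel n1 n2 (x1 y1 : pp n1) (x2 y2 : pp n2) g f u v :
  pp_subposet_iso x1 y1 x2 y2 g f ->
  u \in ppinterval x1 y1 -> v \in ppinterval x1 y1 -> ppcov u v ->
  exists m a, [/\ m \in ppE (ppinterval x1 y1), a \in ppE (ppinterval x1 y1),
     pplabel u v = ((m : nat).+1, (a : nat).+1 + (n1 - #|parts u|)) &
     pplabel (g u) (g v) = ((f m : nat).+1, (f a : nat).+1 + (n2 - #|parts (g u)|))].
Proof.
move=> Hiso uI vI Hc.
have Hlt : pplt u v by case/andP: Hc.
have Huv : pple u v by case/andP: Hlt.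
case: (Hiso) => _ _ _ fmono fcov.
have [D1 _ Dpt] := fcov u v uI vI Hc.
set E := ppE _.
have DE : ppD u v \subset E.
  apply/subsetP => i iD; apply/bigcupP; exists u => //; apply/bigcupP.
  by exists v => //; rewrite vI Huv.
have hf := fmono_good fmono.
have fle : forall i j, i \in ppD u v -> j \in ppD u v -> i <= j -> f i <= f j.
  move=> i j iS jS; have [_ _ ->] := hf i j (subsetP DE i iS) (subsetP DE j jS).
  done.
have [i0 /andP[i0S i0pt]] := ex_label Hlt.
set S' := [set i in ppD u v | ~~ ppdelta_pt u v i].
have S'S : S' \subset ppD u v by apply/subsetP => i; rewrite inE => /andP[].
have i0S' : i0 \in S' by rewrite inE i0S.
have [m mS [em mmax]] := max_att i0S.
have [a aS [ea amax]] := max_att i0S'.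
exists m, a; split.
- exact: subsetP DE m mS.
- exact: subsetP DE a (subsetP S'S a aS).
- rewrite /pplabel em -addnBA ?card_parts //.
  have -> : \max_(i in ppD u v | ~~ ppdelta_pt u v i) (i : nat) = \max_(i in S') (i : nat).
    by apply: eq_bigl => i; rewrite /S' inE.
  by rewrite ea.
- rewrite /pplabel -addnBA ?card_parts //.
  have -> : \max_(i in ppD (g u) (g v) | ~~ ppdelta_pt (g u) (g v) i) (i : nat)
     = \max_(i in f @: S') (i : nat).
    apply: eq_bigl => j; rewrite D1; apply/andP/imsetP.
      case=> /imsetP [i iS ->] npt; exists i => //.
      by rewrite /S' inE iS -Dpt.
    case=> i; rewrite /S' inE => /andP[iS npt] ->; split; first exact: imset_f.
    by rewrite Dpt.
  rewrite D1 (maximg mS); last by move=> i iS; apply: fle => //; exact: mmax.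
  rewrite (maximg aS) // => i iS'.
  by apply: fle; [exact: subsetP S'S i iS' | exact: subsetP S'S a aS | exact: amax].
Qed.

Lemma chain_rel n1 n2 (x1 y1 : pp n1) (x2 y2 : pp n2) g f :
  pp_subposet_iso x1 y1 x2 y2 g f ->
  forall s u, u \in ppinterval x1 y1 -> path (@ppcov n1) u s -> last u s = y1 ->
  wrel (ppE (ppinterval x1 y1)) f (n1 - #|parts u|) (n2 - #|parts (g u)|)
      (word u s) (word (g u) (map g s)).
Proof.
move=> Hiso; elim=> [|v s IH] u uI //= /andP[Hc Hp] Hl.
have vI : v \in ppinterval x1 y1.
  move: uI; rewrite !inE => /andP[a _].
  have Huv : pple u v by case/andP: Hc => /andP[].
  by rewrite (pple_trans a Huv) -Hl path_le.
have [m [a [mE aE L1 L2]]] := label_rel Hiso uI vI Hc.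
split; first by exists m, a; rewrite L1 L2.
have e1 : n1 - #|parts v| = (n1 - #|parts u|).+1.
  by have := cov_card Hc; have := card_parts u; lia.
have e2 : n2 - #|parts (g v)| = (n2 - #|parts (g u)|).+1.
  have := cov_card (gcov Hiso uI vI Hc); have := card_parts (g u); lia.
rewrite -e1 -e2; exact: IH.
Qed.

Theorem mainTheorem7 :
  forall (n1 n2 : nat) (x1 y1 : pp n1) (x2 y2 : pp n2)
         (g : pp n1 -> pp n2) (f : 'I_n1 -> 'I_n2),
    pple x1 y1 -> pple x2 y2 ->
    pp_subposet_iso x1 y1 x2 y2 g f ->
    (forall s, maxchain x1 y1 s ->
       incr_word (word (g x1) (map g s)) = incr_word (word x1 s)) /\
    (forall s t, maxchain x1 y1 s -> maxchain x1 y1 t ->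
       wlexle (word x1 s) (word x1 t) ->
       wlexle (word (g x1) (map g s)) (word (g x1) (map g t))).
Proof.
move=> n1 n2 x1 y1 x2 y2 g f H1 H2 Hiso.
have x1I : x1 \in ppinterval x1 y1 by rewrite inE pple_refl H1.
have hf : fgood (ppE (ppinterval x1 y1)) f.
  by case: Hiso => _ _ _ fmono _; exact: fmono_good.
split.
  move=> s /andP[Hp /eqP Hl].
  have HH := chain_rel Hiso x1I Hp Hl; exact: (rel_sorted hf HH).
move=> s t /andP[Hp /eqP Hl] /andP[Hp' /eqP Hl'].
move=> H; exact: (rel_lex hf (chain_rel Hiso x1I Hp Hl) (chain_rel Hiso x1I Hp' Hl') H).
Qed.
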